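(* Let $n\ge1$, $L,\underline b>0$, and let $(k_p,k_i)\in(0,\infty)^2$ satisfy $k_p^2\underline b>k_pL+k_i+L^2/(4\underline b)$. Then the $2n\times2n$ matrix $$P=\begin{bmatrix}2k_pk_i\underline bI_n&k_iI_n\\k_iI_n&k_pI_n\end{bmatrix}$$ is positive definite. Moreover, there exists $\gamma>0$, depending only on $(k_i,k_p,L,\underline b)$, such that for all $n\times n$ real matrices $a,\theta$ with $\|a\|\le L$ and $\mathrm{Sym}[\theta]\ge\underline bI_n$, the matrix $$A=\begin{bmatrix}0_n&I_n\\-k_i\theta&a-k_p\theta\end{bmatrix}$$ satisfies $PA+A^{\mathsf T}P\le-\gamma I_{2n}$.
   Context: $\|\cdot\|$ is the operator norm induced by the Euclidean norm; $\mathrm{Sym}[\theta]=(\theta+\theta^{\mathsf T})/2$; for symmetric matrices, $S_1\ge S_2$ means $S_1-S_2$ is positive semidefinite; $0_n$ and $I_n$ are the $n\times n$ zero and identity matrices. *)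

(* Defs.v *)
From HB Require Import structures.
From mathcomp Require Import all_boot all_order all_algebra.
From mathcomp Require Import classical_sets reals.
Set Implicit Arguments. Unset Strict Implicit. Unset Printing Implicit Defensive.
Import Order.TTheory GRing.Theory Num.Theory.
Local Open Scope ring_scope.
Local Open Scope classical_set_scope.

Section Defs.
Variable R : realType.

Definition eucl_norm (n : nat) (x : 'cV[R]_n) : R :=
  Num.sqrt (\sum_(i < n) x i 0 ^+ 2).

Definition opnorm (m n : nat) (a : 'M[R]_(m, n)) : R :=
  sup [set eucl_norm (a *m x) | x in [set x : 'cV[R]_n | eucl_norm x <= 1]].

Definition qform (n : nat) (S : 'M[R]_n) (x : 'cV[R]_n) : R :=
  ((x^T *m S *m x) 0 0).

Definition loewner_le (n : nat) (S1 S2 : 'M[R]_n) : Prop :=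
  forall x : 'cV[R]_n, 0 <= qform (S2 - S1) x.

Definition posdef (n : nat) (P : 'M[R]_n) : Prop :=
  P^T = P /\ forall x : 'cV[R]_n, x != 0 -> 0 < qform P x.

Definition symmx (n : nat) (th : 'M[R]_n) : 'M[R]_n :=
  2^-1 *: (th + th^T).

Definition Pmat (n : nat) (kp ki bl : R) : 'M[R]_(n + n) :=
  block_mx ((2 * kp * ki * bl)%:M) (ki%:M) (ki%:M) (kp%:M).

Definition Amat (n : nat) (kp ki : R) (a th : 'M[R]_n) : 'M[R]_(n + n) :=
  block_mx 0 1%:M (- (ki *: th)) (a - kp *: th).

End Defs.

(* Main.v *)
Require Import Defs.
From HB Require Import structures.
From mathcomp Require Import all_boot all_order all_algebra.
From mathcomp Require Import classical_sets reals.
From mathcomp Require Import ring lra.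
Import Order.TTheory GRing.Theory Num.Theory.
Local Open Scope ring_scope.

Section Helpers.
Context {R : realType}.
Implicit Types n : nat.

Definition dot {n : nat} (p q : 'cV[R]_n) : R := \sum_i p i 0 * q i 0.

Lemma dotE {n} (p q : 'cV[R]_n) : (p^T *m q) 0 0 = dot p q.
Proof. by rewrite !mxE; apply: eq_bigr => i _; rewrite mxE. Qed.

Lemma dotC {n} (p q : 'cV[R]_n) : dot p q = dot q p.
Proof. by apply: eq_bigr => i _; rewrite mulrC. Qed.

Lemma dotDl {n} (p1 p2 q : 'cV[R]_n) : dot (p1 + p2) q = dot p1 q + dot p2 q.
Proof. by rewrite /dot -big_split; apply: eq_bigr => i _; rewrite mxE mulrDl. Qed.

Lemma dotDr {n} (p q1 q2 : 'cV[R]_n) : dot p (q1 + q2) = dot p q1 + dot p q2.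
Proof. by rewrite dotC dotDl !(dotC _ p). Qed.

Lemma dotZl {n} c (p q : 'cV[R]_n) : dot (c *: p) q = c * dot p q.
Proof. by rewrite /dot mulr_sumr; apply: eq_bigr => i _; rewrite mxE mulrA. Qed.

Lemma dotZr {n} c (p q : 'cV[R]_n) : dot p (c *: q) = c * dot p q.
Proof. by rewrite dotC dotZl dotC. Qed.

Lemma dotNl {n} (p q : 'cV[R]_n) : dot (- p) q = - dot p q.
Proof. by rewrite -scaleN1r dotZl mulN1r. Qed.

Lemma dotNr {n} (p q : 'cV[R]_n) : dot p (- q) = - dot p q.
Proof. by rewrite dotC dotNl dotC. Qed.

Lemma dotBr {n} (p q1 q2 : 'cV[R]_n) : dot p (q1 - q2) = dot p q1 - dot p q2.
Proof. by rewrite dotDr dotNr. Qed.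

Lemma dot_col {n} (p1 p2 q1 q2 : 'cV[R]_n) :
  dot (col_mx p1 p2) (col_mx q1 q2) = dot p1 q1 + dot p2 q2.
Proof.
rewrite /dot big_split_ord /=; congr (_ + _); apply: eq_bigr => i _.
  by rewrite !col_mxEu.
by rewrite !col_mxEd.
Qed.

Lemma dot_mulmx {n} (p q : 'cV[R]_n) (S : 'M[R]_n) :
  dot p (S *m q) = dot (S^T *m p) q.
Proof. by rewrite -!dotE trmx_mul trmxK mulmxA. Qed.

Lemma dot_ge0 {n} (p : 'cV[R]_n) : 0 <= dot p p.
Proof. by apply: sumr_ge0 => i _; rewrite -expr2 sqr_ge0. Qed.


Lemma qform_dot {n} (S : 'M[R]_n) x : qform S x = dot x (S *m x).
Proof. by rewrite /qform -mulmxA dotE. Qed.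

Lemma qformD {n} (S1 S2 : 'M[R]_n) x : qform (S1 + S2) x = qform S1 x + qform S2 x.
Proof. by rewrite !qform_dot mulmxDl dotDr. Qed.

Lemma qformZ {n} c (S : 'M[R]_n) x : qform (c *: S) x = c * qform S x.
Proof. by rewrite !qform_dot -scalemxAl dotZr. Qed.

Lemma qformN {n} (S : 'M[R]_n) x : qform (- S) x = - qform S x.
Proof. by rewrite -scaleN1r qformZ mulN1r. Qed.

Lemma qformB {n} (S1 S2 : 'M[R]_n) x : qform (S1 - S2) x = qform S1 x - qform S2 x.
Proof. by rewrite qformD qformN. Qed.

Lemma qform_scalar {n} c x : qform (c%:M : 'M[R]_n) x = c * dot x x.
Proof. by rewrite qform_dot mul_scalar_mx dotZr. Qed.

Lemma qform_tr {n} (S : 'M[R]_n) x : qform S^T x = qform S x.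
Proof. by rewrite !qform_dot dot_mulmx trmxK dotC. Qed.

Lemma qform_sym {n} (S : 'M[R]_n) x : qform (symmx S) x = qform S x.
Proof. rewrite /symmx qformZ qformD qform_tr; by field. Qed.

Lemma dot_eq0 {n} (p : 'cV[R]_n) : dot p p = 0 -> p = 0.
Proof.
move=> /eqP; rewrite psumr_eq0 => [/allP H|i _]; last by rewrite -expr2 sqr_ge0.
apply/matrixP => i j; rewrite ord1 mxE.
have := H i (mem_index_enum i); rewrite implyTb mulf_eq0 orbb.
by move/eqP.
Qed.

Lemma amgm {n} t (p q : 'cV[R]_n) : 2 * t * dot p q <= t ^+ 2 * dot p p + dot q q.
Proof.
rewrite /dot !mulr_sumr -big_split /=; apply: ler_sum => i _; have := sqr_ge0 (t * p i 0 - q i 0); nra.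
Qed.

Lemma amgmN {n} t (p q : 'cV[R]_n) : - (t ^+ 2 * dot p p + dot q q) <= 2 * t * dot p q.
Proof. have := amgm t (- p) q; rewrite dotNl dotNr !dotNl opprK; lra. Qed.

Lemma eucl_dot {n} (x : 'cV[R]_n) : eucl_norm x = Num.sqrt (dot x x).
Proof. by rewrite /eucl_norm; congr Num.sqrt; apply: eq_bigr => i _; rewrite expr2. Qed.

Lemma sqrt_le_sq (y L : R) : 0 <= y -> Num.sqrt y <= L -> y <= L ^+ 2.
Proof.
move=> y0 h; rewrite -(sqr_sqrtr y0).
have s0 := sqrtr_ge0 y; nra.
Qed.

Lemma dot0 {n} : dot (0 : 'cV[R]_n) 0 = 0.
Proof. by rewrite /dot big1 // => i _; rewrite mxE mul0r. Qed.

Lemma opnorm_hassup {n} (a : 'M[R]_n) :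
  has_sup [set eucl_norm (a *m x) | x in [set x : 'cV[R]_n | eucl_norm x <= 1]].
Proof.
split.
  exists (eucl_norm (a *m 0)); exists 0 => //=.
  by rewrite eucl_dot dot0 sqrtr0.
exists (Num.sqrt (\sum_i (\sum_j `|a i j|) ^+ 2)) => _ [x /= hx <-].
have dx : dot x x <= 1.
  by rewrite -(expr1n R 2); apply: sqrt_le_sq; [exact: dot_ge0| rewrite -eucl_dot].
have xj : forall j, `|x j 0| <= 1.
  move=> j; have : x j 0 * x j 0 <= 1.
    apply: le_trans dx; rewrite /dot (bigD1 j) //= lerDl.
    by apply: sumr_ge0 => i _; rewrite -expr2 sqr_ge0.
  by move=> h; rewrite ler_norml; apply/andP; split; nra.
rewrite /eucl_norm ler_sqrt; last by apply: sumr_ge0 => i _; rewrite sqr_ge0.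
apply: ler_sum => i _.
have hy : `|(a *m x) i 0| <= \sum_j `|a i j|.
  rewrite mxE; apply: le_trans (ler_norm_sum _ _ _) _.
  apply: ler_sum => j _; rewrite normrM.
  have := xj j; have := normr_ge0 (a i j); nra.
move: hy => /ler_normlP [h1 h2]; nra.
Qed.

Lemma opnorm_bound {n} (a : 'M[R]_n) (L : R) (v : 'cV[R]_n) :
  0 <= L -> opnorm a <= L -> dot (a *m v) (a *m v) <= L ^+ 2 * dot v v.
Proof.
move=> L0 hL.
have ub : forall x : 'cV[R]_n, eucl_norm x <= 1 -> eucl_norm (a *m x) <= L.
  move=> x hx; apply: le_trans hL; rewrite /opnorm; apply: (sup_upper_bound (opnorm_hassup a)).
  by exists x.
have [d0|dpos] := eqVneq (dot v v) 0.
  by rewrite (dot_eq0 _ d0) mulmx0 dot0 mulr0.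
have dgt : 0 < dot v v by rewrite lt_def dpos dot_ge0.
set s := Num.sqrt (dot v v).
have s0 : 0 < s by rewrite sqrtr_gt0.
have ss : s ^+ 2 = dot v v by rewrite sqr_sqrtr // ltW.
set w := s^-1.
have sw : s * w = 1 by rewrite mulfV // gt_eqF.
have := ub (w *: v).
rewrite !eucl_dot dotZl dotZr -scalemxAr dotZl dotZr !mulrA.
have -> : w * w * dot v v = 1 by rewrite -ss; rewrite -(expr1n R 2) -sw; ring.
rewrite sqrtr1 lexx => /(_ isT) h.
have := sqrt_le_sq _ _ ^~ h.
have D0 := dot_ge0 (a *m v).
have ww : 0 <= w * w by rewrite -expr2 sqr_ge0.
move=> /(_ (mulr_ge0 ww D0)) h2.
have -> : dot (a *m v) (a *m v) = s ^+ 2 * (w * w * dot (a *m v) (a *m v)).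
  rewrite !mulrA -(mulrA _ w w) -expr2 -exprMn sw expr1n. ring.
rewrite -ss mulrC; apply: ler_wpM2r => //; exact: sqr_ge0.
Qed.

Lemma qformP {n} (kp ki bl : R) (u v : 'cV[R]_n) :
  qform (Pmat n kp ki bl) (col_mx u v) =
  2 * kp * ki * bl * dot u u + 2 * ki * dot u v + kp * dot v v.
Proof.
rewrite qform_dot /Pmat mul_block_col !mul_scalar_mx dot_col !dotDr !dotZr (dotC v u).
ring.
Qed.

Lemma Ptr {n} (kp ki bl : R) : (Pmat n kp ki bl)^T = Pmat n kp ki bl.
Proof. by rewrite /Pmat tr_block_mx !tr_scalar_mx. Qed.

Lemma qformQ {n} (kp ki bl : R) (a th : 'M[R]_n) (u v : 'cV[R]_n) :
  qform (Pmat n kp ki bl *m Amat kp ki a th + (Amat kp ki a th)^T *m Pmat n kp ki bl)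
    (col_mx u v) =
  2 * (2 * kp * ki * bl * dot u v + ki * dot v v + ki * dot u (a *m v)
       + kp * dot v (a *m v)) - 2 * qform th (ki *: u + kp *: v).
Proof.
rewrite qformD !qform_dot -!mulmxA dot_mulmx (dot_mulmx _ _ (Amat _ _ _ _)^T) trmxK Ptr.
rewrite (dotC (Amat kp ki a th *m _)).
rewrite /Amat /Pmat !mul_block_col !mul_scalar_mx mul0mx add0r ?mul1mx ?scale1r dot_col.
rewrite mulNmx mulmxBl -!scalemxAl !mulmxDr -!scalemxAr.
rewrite !(dotDl, dotDr, dotZl, dotZr, dotNr, dotNl).
ring.
Qed.

Definition delt (b kp ki L : R) := 2 * b * kp ^+ 2 - 2 * ki - 2 * kp * L - L ^+ 2 / (2 * b).
Definition cc (b kp ki L : R) := L ^+ 2 / (L ^+ 2 + b * delt b kp ki L).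
Definition gam (b kp ki L : R) :=
  Num.min (2 * b * ki ^+ 2 * (1 - cc b kp ki L)) (delt b kp ki L / 2).

Lemma delt_gt0 {b kp ki L : R} : 0 < b -> 0 < L ->
  kp * L + ki + L ^+ 2 / (4 * b) < kp ^+ 2 * b -> 0 < delt b kp ki L.
Proof.
move=> b0 L0 h.
have -> : delt b kp ki L = 2 * (kp ^+ 2 * b - (kp * L + ki + L ^+ 2 / (4 * b))).
  rewrite /delt; field; rewrite gt_eqF //.
by rewrite mulr_gt0 // subr_gt0.
Qed.

Lemma cc_bounds {b kp ki L : R} : 0 < b -> 0 < L -> 0 < delt b kp ki L ->
  0 < cc b kp ki L < 1.
Proof.
move=> b0 L0 d0; rewrite /cc.
have hL : 0 < L ^+ 2 by rewrite exprn_gt0.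
have hd : 0 < b * delt b kp ki L by rewrite mulr_gt0.
apply/andP; split; first by rewrite divr_gt0 // addr_gt0.
by rewrite ltr_pdivrMr ?addr_gt0 // mul1r ltrDl.
Qed.

Lemma gam_gt0 (b kp ki L : R) : 0 < b -> 0 < ki -> 0 < L ->
  kp * L + ki + L ^+ 2 / (4 * b) < kp ^+ 2 * b -> 0 < gam b kp ki L.
Proof.
move=> b0 ki0 L0 h; have d0 := delt_gt0 b0 L0 h.
have /andP[c0 c1] := cc_bounds b0 L0 d0.
rewrite /gam lt_min; apply/andP; split.
  by rewrite !mulr_gt0 ?exprn_gt0 // subr_gt0.
by rewrite divr_gt0.
Qed.

Lemma scal {b kp ki L U V X0 X Y W q : R} :
  0 < b -> 0 < kp -> 0 < ki -> 0 < L ->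
  kp * L + ki + L ^+ 2 / (4 * b) < kp ^+ 2 * b ->
  0 <= U -> 0 <= V -> W <= L ^+ 2 * V ->
  2 * L * Y <= L ^+ 2 * V + W ->
  2 * (2 * b * ki * cc b kp ki L) * X <= (2 * b * ki * cc b kp ki L) ^+ 2 * U + W ->
  b * (ki ^+ 2 * U + 2 * ki * kp * X0 + kp ^+ 2 * V) <= q ->
  0 <= - gam b kp ki L * (U + V)
       - (2 * (2 * kp * ki * b * X0 + ki * V + ki * X + kp * Y) - 2 * q).
Proof.
move=> b0 kp0 ki0 L0 h U0 V0 hW hY hX hq.
have d0 := delt_gt0 b0 L0 h.
have /andP[c0 c1] := cc_bounds b0 L0 d0.
set c := cc b kp ki L in hX c0 c1 *.
set d := delt b kp ki L in d0 *.
set t := 2 * b * ki * c in hX.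
have t0 : 0 < t by rewrite /t; do 3?apply: mulr_gt0 => //.
have Y1 : Y <= L * V.
  have : 2 * L * Y <= 2 * L * (L * V) by apply: le_trans hY _; rewrite -[_ *(L * V)]mulrA; nra.
  by rewrite ler_pM2l // mulr_gt0.
have X1 : 2 * ki * X <= ki * t * U + ki * L ^+ 2 / t * V.
  have : t * (2 * ki * X) <= t * (ki * t * U + ki * L ^+ 2 / t * V).
    have -> : t * (ki * t * U + ki * L ^+ 2 / t * V) = ki * (t ^+ 2 * U + L ^+ 2 * V).
      by field; rewrite gt_eqF.
    have : ki * (2 * t * X) <= ki * (t ^+ 2 * U + L ^+ 2 * V).
      by rewrite ler_pM2l //; apply: le_trans hX _; rewrite lerD2l.
    lra.
  by rewrite ler_pM2l.
have e1 : ki * t = 2 * b * ki ^+ 2 * c by rewrite /t; ring.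
have e2 : ki * L ^+ 2 / t = L ^+ 2 / (2 * b) + d / 2.
  rewrite /t /c /cc -/d; field.
  have hL : 0 < L ^+ 2 by rewrite exprn_gt0.
  by rewrite !gt_eqF ?addr_gt0 ?mulr_gt0.
rewrite e1 e2 in X1.
have g1 : gam b kp ki L <= 2 * b * ki ^+ 2 * (1 - c) by rewrite /gam ge_min lexx.
have g2 : gam b kp ki L <= d / 2 by rewrite /gam ge_min lexx orbT.
have p1 : gam b kp ki L * U <= 2 * b * ki ^+ 2 * (1 - c) * U by rewrite ler_wpM2r.
have p2 : gam b kp ki L * V <= d / 2 * V by rewrite ler_wpM2r.
have p3 : kp * Y <= kp * (L * V) by rewrite ler_pM2l.
have ed : d = 2 * b * kp ^+ 2 - 2 * ki - 2 * kp * L - L ^+ 2 / (2 * b) by [].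
rewrite ed in p2 X1.
lra.
Qed.

End Helpers.

Theorem proposition4p4 (R : realType) (L bl kp ki : R) :
  0 < L -> 0 < bl -> 0 < kp -> 0 < ki ->
  kp * L + ki + L ^+ 2 / (4 * bl) < kp ^+ 2 * bl ->
  (forall n : nat, (1 <= n)%N -> posdef (Pmat n kp ki bl)) /\
  exists gamma : R, 0 < gamma /\
    forall (n : nat), (1 <= n)%N ->
    forall a theta : 'M[R]_n,
      opnorm a <= L -> loewner_le (bl%:M) (symmx theta) ->
      loewner_le (Pmat n kp ki bl *m Amat kp ki a theta
                  + (Amat kp ki a theta)^T *m Pmat n kp ki bl)
                 (- (gamma%:M)).
Proof.
move=> L0 b0 kp0 ki0 h; split.
  move=> n _; split; first exact: Ptr.
  move=> x; rewrite -(vsubmxK x); move: (usubmx x) (dsubmx x) => u v nz.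
  have hx : 0 < dot u u + dot v v.
    rewrite lt_def addr_ge0 ?dot_ge0 // andbT; apply/eqP => e.
    by move: nz; rewrite -dot_col in e; rewrite (dot_eq0 _ e) eqxx.
  rewrite qformP.
  have hm := amgmN (kp * bl) u v.
  have e1 : ki * (- ((kp * bl) ^+ 2 * dot u u + dot v v)) <= ki * (2 * (kp * bl) * dot u v).
    by rewrite ler_pM2l.
  have hU := dot_ge0 u; have hV := dot_ge0 v.
  have hk : 0 < kp ^+ 2 * bl - ki.
    have q1 : 0 <= kp * L by rewrite mulr_ge0 ?ltW.
    have q2 : 0 <= L ^+ 2 / (4 * bl) by rewrite divr_ge0 ?sqr_ge0 // mulr_ge0 // ltW.
    lra.
  have kb : 0 < kp * bl by rewrite mulr_gt0.
  rewrite -(pmulr_rgt0 _ kb).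
  have p1 : 0 <= kp ^+ 2 * ki * bl ^+ 2 * dot u u.
    by do 3!apply: mulr_ge0 => //; rewrite ?sqr_ge0 ?ltW.
  have p2 : 0 <= (kp ^+ 2 * bl - ki) * dot v v by apply: mulr_ge0 => //; exact: ltW.
  have [U0|Upos] := eqVneq (dot u u) 0.
    rewrite U0 add0r in hx.
    have p3 : 0 < (kp ^+ 2 * bl - ki) * dot v v by apply: mulr_gt0.
    lra.
  have p3 : 0 < kp ^+ 2 * ki * bl ^+ 2 * dot u u.
    do ?apply: mulr_gt0; rewrite ?exprn_gt0 //.
    by rewrite lt_def Upos hU.
  lra.
exists (gam bl kp ki L); split; first exact: gam_gt0.
move=> n _ a th ha hth x.
rewrite -(vsubmxK x); move: (usubmx x) (dsubmx x) => u v.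
rewrite qformB qformN qform_scalar dot_col qformQ.
have := hth (ki *: u + kp *: v); rewrite qformB qform_sym qform_scalar.
rewrite !(dotDl, dotDr, dotZl, dotZr) (dotC v u) subr_ge0 => hq.
have hq' : bl * (ki ^+ 2 * dot u u + 2 * ki * kp * dot u v + kp ^+ 2 * dot v v)
   <= qform th (ki *: u + kp *: v).
  by apply: le_trans hq; rewrite le_eqVlt; apply/orP; left; apply/eqP; ring.
have H := scal (U := dot u u) (V := dot v v) (X0 := dot u v) b0 kp0 ki0 L0 h (dot_ge0 u) (dot_ge0 v)
   (opnorm_bound _ _ v (ltW L0) ha) (amgm L v (a *m v)) (amgm _ u (a *m v)) hq'.
lra.
Qed.
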